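(* For every $n\in\mathbb{N}$, $n\ge1$, and all $\Delta,\Delta'\in\mathcal{P}_n$ with $\Delta\not\equiv\Delta'$: $d_\Delta(i)=d_{\Delta'}(i)$ for every $i\in\mathbb{Z}_n$ if and only if $f^{(\Delta)}_{128,n}=f^{(\Delta')}_{128,n}$.
   Context: Cells are indexed by $\mathbb{Z}_n=\{0,\dots,n-1\}$, indices modulo $n$. Rule $128$ has local rule $r_{128}(x_1,x_2,x_3)=x_1\wedge x_2\wedge x_3$ and global function $f_{128,n}(x)_i=r_{128}(x_{i-1},x_i,x_{i+1})$. An update schedule is an ordered partition $\Delta=(\Delta_1,\dots,\Delta_k)$ of $\mathbb{Z}_n$ into nonempty blocks; $\mathcal{P}_n$ is the set of them. For a block $B$ let $f^{(B)}(x)_i=f_{128,n}(x)_i$ if $i\in B$ and $x_i$ otherwise; $f^{(\Delta)}_{128,n}=f^{(\Delta_k)}\circ\cdots\circ f^{(\Delta_1)}$. (The paper phrases equality of dynamics as equality of transition digraphs with arcs $(x,f^{(\Delta)}_{128,n}(x))$, equivalent to equality of maps.) For $u,v\in\mathbb{Z}_n$ with $u\in\Delta_a$, $v\in\Delta_b$, $lab_\Delta((u,v))=\oplus$ if $b\le a$ and $\ominus$ if $a<b$. Define $d^{\leftarrow}_\Delta(i)=\max\{k\in\mathbb{N}:\forall j,\,0<j<k\Rightarrow lab_\Delta((i-j,i-j+1))=\ominus\}$, $d^{\rightarrow}_\Delta(i)=\max\{k\in\mathbb{N}:\forall j,\,0<j<k\Rightarrow lab_\Delta((i+j,i+j-1))=\ominus\}$,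 and $d_\Delta(i)=\{i-k\bmod n:0\le k\le d^{\leftarrow}_\Delta(i)\}\cup\{i+k\bmod n:0\le k\le d^{\rightarrow}_\Delta(i)\}$. $\Delta\equiv\Delta'$ iff $lab_\Delta$ and $lab_{\Delta'}$ agree on every arc $(i,i+1)$ and $(i+1,i)$, $i\in\mathbb{Z}_n$. *)

(* Defs.v *)
From mathcomp Require Import all_boot.
Set Implicit Arguments. Unset Strict Implicit. Unset Printing Implicit Defensive.

(* Cells: 'I_n, with cyclic successor ordS (i+1 mod n) and predecessor
   ord_pred (i-1 mod n). Configurations: {ffun 'I_n -> bool}. *)
Definition config (n : nat) := {ffun 'I_n -> bool}.

Definition r128 (x1 x2 x3 : bool) : bool := [&& x1, x2 & x3].

Definition f128 (n : nat) (x : config n) : config n :=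
  [ffun i : 'I_n => r128 (x (ord_pred i)) (x i) (x (ordS i))].

Definition ordered_partition (n : nat) (D : seq {set 'I_n}) : Prop :=
  [/\ all (fun B : {set 'I_n} => B != set0) D,
      (forall u : 'I_n, has (fun B : {set 'I_n} => u \in B) D) &
      (forall a b, a < size D -> b < size D -> a != b ->
          [disjoint nth set0 D a & nth set0 D b])].

Definition fblock (n : nat) (B : {set 'I_n}) (x : config n) : config n :=
  [ffun i : 'I_n => if i \in B then f128 x i else x i].

Definition fsched (n : nat) (D : seq {set 'I_n}) (x : config n) : config n :=
  foldl (fun y B => fblock B y) x D.

Definition blk (n : nat) (D : seq {set 'I_n}) (u : 'I_n) : nat :=
  find (fun B : {set 'I_n} => u \in B) D.

(* lab_Delta((u,v)) : true = (+) (b <= a), false = (-) (a < b),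
   where u in Delta_a, v in Delta_b *)
Definition lab (n : nat) (D : seq {set 'I_n}) (u v : 'I_n) : bool :=
  blk D v <= blk D u.

Definition minus_k (n : nat) (i : 'I_n) (k : nat) : 'I_n := iter k (@ord_pred n) i.
Definition plus_k (n : nat) (i : 'I_n) (k : nat) : 'I_n := iter k (@ordS n) i.

Definition okleft (n : nat) (D : seq {set 'I_n}) (i : 'I_n) (k : nat) : bool :=
  [forall j : 'I_k, (0 < j) ==> ~~ lab D (minus_k i j) (ordS (minus_k i j))].
Definition okright (n : nat) (D : seq {set 'I_n}) (i : 'I_n) (k : nat) : bool :=
  [forall j : 'I_k, (0 < j) ==> ~~ lab D (plus_k i j) (ord_pred (plus_k i j))].

(* d^<-(i) and d^->(i): the maximum k in N satisfying okleft/okright.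
   okleft/okright are downward closed and fail for k = n+1 on an ordered
   partition (a cyclic chain of strict block-index increases is impossible),
   so the maximum over k <= n is the maximum over all of N. *)
Definition dleft (n : nat) (D : seq {set 'I_n}) (i : 'I_n) : nat :=
  \max_(k < n.+1 | okleft D i k) k.
Definition dright (n : nat) (D : seq {set 'I_n}) (i : 'I_n) : nat :=
  \max_(k < n.+1 | okright D i k) k.

Definition dset (n : nat) (D : seq {set 'I_n}) (i : 'I_n) : {set 'I_n} :=
  [set j | [exists k : 'I_(dleft D i).+1, j == minus_k i k]]
  :|: [set j | [exists k : 'I_(dright D i).+1, j == plus_k i k]].

Definition sched_equiv (n : nat) (D D' : seq {set 'I_n}) : Prop :=
  forall i : 'I_n, lab D i (ordS i) = lab D' i (ordS i) /\
                   lab D (ordS i) i = lab D' (ordS i) i.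

(* Main.v *)
Require Import Defs.
From mathcomp Require Import all_boot.
Set Implicit Arguments. Unset Strict Implicit. Unset Printing Implicit Defensive.

Section Proof.
Variables (n : nat) (D : seq {set 'I_n}).
Hypothesis HD : ordered_partition D.

Definition allin (S : {set 'I_n}) (x : config n) := [forall (j | j \in S), x j].

Lemma allinU A B x : allin (A :|: B) x = allin A x && allin B x.
Proof.
apply/forall_inP/andP => [H|[/forall_inP HA /forall_inP HB] j].
  by split; apply/forall_inP => j Hj; apply: H; rewrite inE Hj ?orbT.
by rewrite inE => /orP[]; auto.
Qed.

Lemma allin1 u A x : allin (u |: A) x = x u && allin A x.
Proof.
rewrite allinU; congr andb.
apply/forall_inP/idP => [H|H j]; first by apply: H; rewrite inE.
by rewrite inE => /eqP ->.
Qed.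

Lemma allin0 x : allin set0 x.
Proof. by apply/forall_inP => j; rewrite inE. Qed.

Lemma allin_notin S j : allin S [ffun k => k != j] = (j \notin S).
Proof.
apply/forall_inP/idP => [H|H k Hk].
  by apply/negP => Hj; have := H _ Hj; rewrite ffunE eqxx.
by rewrite ffunE; apply/eqP => e; rewrite -e Hk in H.
Qed.

Lemma blk_lt u : blk D u < size D.
Proof. by case: HD => _ H _; rewrite /blk -has_find. Qed.

Lemma mem_blk u : u \in nth set0 D (blk D u).
Proof. by case: HD => _ H _; apply: (nth_find set0 (H u)). Qed.

Lemma notin_blk t u : t < size D -> t != blk D u -> u \notin nth set0 D t.
Proof.
case: HD => _ _ H tD ne; apply/negP => Hu.
have := H t (blk D u) tD (blk_lt u) ne.
by move/disjointFl => /(_ _ (mem_blk u)); rewrite Hu.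
Qed.

Definition st t x := foldl (fun y B => fblock B y) x (take t D).

Lemma st_succ t x : t < size D -> st t.+1 x = fblock (nth set0 D t) (st t x).
Proof. by move=> tD; rewrite /st (take_nth set0 tD) foldl_rcons. Qed.

Definition V x u := f128 (st (blk D u) x) u.

Lemma st_val t x u : t <= size D ->
  st t x u = if t <= blk D u then x u else V x u.
Proof.
elim: t => [|t IH] tD; first by rewrite /st take0.
rewrite st_succ // ffunE.
have tD' : t <= size D by apply: ltnW.
case: (ltngtP t (blk D u)) => [lt|gt|e].
- by rewrite (negbTE (notin_blk tD _)) ?IH ?(ltnW lt) ?lt // neq_ltn lt.
- rewrite (negbTE (notin_blk tD _)) ?IH //; last by rewrite neq_ltn gt orbT.
  by rewrite leqNgt gt /=.
- by rewrite e mem_blk.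
Qed.

Lemma fsched_V x u : fsched D x u = V x u.
Proof.
have -> : fsched D x = st (size D) x by rewrite /st take_size.
by rewrite st_val // leqNgt blk_lt.
Qed.

Lemma V_rec x u : V x u =
  [&& (if blk D u <= blk D (ord_pred u) then x (ord_pred u) else V x (ord_pred u)),
      x u &
      (if blk D u <= blk D (ordS u) then x (ordS u) else V x (ordS u))].
Proof.
rewrite {1}/V /f128 ffunE /r128 !st_val ?leqnn //; exact: ltnW (blk_lt u).
Qed.

Definition ok (s s' : 'I_n -> 'I_n) i k :=
  [forall j : 'I_k, (0 < j) ==> ~~ lab D (iter j s i) (s' (iter j s i))].

Definition P (s s' : 'I_n -> 'I_n) i j := ~~ lab D (iter j s i) (s' (iter j s i)).

Lemma okP s s' i k : reflect (forall j, 0 < j < k -> P s s' i j) (ok s s' i k).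
Proof.
apply: (iffP forallP) => H j.
  by move=> /andP[j0 jk]; have := H (Ordinal jk); rewrite /= j0.
by apply/implyP => j0; apply: H; rewrite j0 ltn_ord.
Qed.

Lemma ok_le s s' i k k' : k' <= k -> ok s s' i k -> ok s s' i k'.
Proof.
move=> le /okP H; apply/okP => j /andP[j0 jk]; apply: H.
by rewrite j0 (leq_trans jk le).
Qed.

Lemma ok0 s s' i : ok s s' i 0.
Proof. by apply/okP => j /andP[_]. Qed.
Lemma ok1 s s' i : ok s s' i 1.
Proof. by apply/okP => j /andP[j0 j1]; rewrite ltnS leqn0 in j1; rewrite (eqP j1) in j0. Qed.

Variables (s s' : 'I_n -> 'I_n).
Hypothesis Hc : cancel s s'.
Hypothesis Hn : forall y, iter n s y = y.

Lemma okS i k : ok s s' i k.+2 = (blk D (s i) < blk D i) && ok s s' (s i) k.+1.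
Proof.
apply/okP/andP => [H|[c /okP H] j /andP[j0 jk]].
  split.
    by have := H 1 erefl; rewrite /P /= Hc /lab -ltnNge.
  apply/okP => j /andP[j0 jk]; have := H j.+1; rewrite /P iterSr; apply.
  exact: jk.
case: j j0 jk => // -[|j] _ jk; first by rewrite /P /= Hc /lab -ltnNge.
by rewrite /P iterSr; apply: H.
Qed.

Definition Cset i := [set j | [exists k : 'I_n.+1, ok s s' i k && (j == iter k s i)]].

Lemma n_gt0 (i : 'I_n) : 0 < n.
Proof. by case: i => m; apply: leq_ltn_trans. Qed.

Lemma CsetE i : Cset i =
  i |: (s i |: (if blk D (s i) < blk D i then Cset (s i) else set0)).
Proof.
have n0 := n_gt0 i.
apply/setP => j; rewrite !inE; apply/existsP/idP.
  case=> -[[|[|k]] kn] /= /andP[okk /eqP ->]; rewrite ?eqxx ?orbT //.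
  move: okk; rewrite okS => /andP[c okk]; rewrite c inE.
  apply/orP; right; apply/orP; right; apply/existsP.
  by exists (Ordinal (ltnW kn)); rewrite /= okk; apply/eqP; rewrite -iterSr.
case/orP => [/eqP->|]; first by exists ord0; rewrite /= ok0 eqxx.
have k1 : 1 < n.+1 by [].
case/orP => [/eqP->|]; first by exists (Ordinal k1); rewrite /= ok1 eqxx.
case: ifP => c; last by rewrite inE.
rewrite inE => /existsP[[[|k] kn] /= /andP[okk /eqP->]].
  by exists (Ordinal k1); rewrite /= ok1 eqxx.
case: (ltnP k.+1 n) => kn'.
  by exists (Ordinal (kn' : k.+2 < n.+1)); rewrite /= okS c okk; apply/eqP; rewrite -iterSr.
have ek : k.+1 = n by apply/eqP; rewrite eqn_leq kn'; rewrite ltnS in kn; rewrite kn.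
have Hk : iter k.+1 s (s i) = s i by rewrite ek Hn.
by exists (Ordinal k1); rewrite /= ok1 -[s (iter k s (s i))]/(iter k.+1 s (s i)) Hk eqxx.
Qed.

Lemma dsetE i :
  [set j | [exists k : 'I_(\max_(k < n.+1 | ok s s' i k) k).+1, j == iter k s i]]
  = Cset i.
Proof.
rewrite (bigmax_eq_arg ord0) ?ok0 //; case: arg_maxnP; first exact: ok0.
move=> m okm maxm; apply/setP => j; rewrite !inE.
apply/existsP/existsP => [[k /eqP->]|[k /andP[okk /eqP->]]].
  have kn : k < n.+1 by apply: leq_ltn_trans (ltn_ord m); rewrite -ltnS.
  by exists (Ordinal kn); rewrite /= eqxx andbT (ok_le _ okm) // -ltnS.
have kn : k < (nat_of_ord m).+1 by rewrite ltnS; apply: maxm.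
by exists (Ordinal kn); rewrite /= eqxx.
Qed.

End Proof.

Lemma iter_ordS n k (y : 'I_n) : val (iter k (@ordS n) y) = (y + k) %% n.
Proof.
elim: k => [|k IH] /=; first by rewrite addn0 modn_small.
by rewrite IH addnS -[((y + k) %% n).+1]addn1 modnDml addn1.
Qed.

Lemma iter_ordS_n n (y : 'I_n) : iter n (@ordS n) y = y.
Proof. by apply: val_inj; rewrite iter_ordS modnDr modn_small. Qed.

Lemma iter_pred_n n (y : 'I_n) : iter n (@ord_pred n) y = y.
Proof.
have H : forall k (z : 'I_n), iter k (@ordS n) (iter k (@ord_pred n) z) = z.
  by elim=> [|k IH] z //; rewrite iterSr iterS ord_predK IH.
by rewrite -{2}(H n y) iter_ordS_n.
Qed.

Lemma V_spec n (D : seq {set 'I_n}) x u : ordered_partition D ->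
  V D x u = allin (Cset D (@ord_pred n) (@ordS n) u :|: Cset D (@ordS n) (@ord_pred n) u) x.
Proof.
move=> HD.
have CL := CsetE D (@ord_predK n) (@iter_pred_n n).
have CR := CsetE D (@ordSK n) (@iter_ordS_n n).
have [m] := ubnP (blk D u); elim: m u => // m IH u /= um.
rewrite V_rec // allinU CL CR !allin1.
case: (leqP (blk D u) (blk D (ord_pred u))) => c /=;
case: (leqP (blk D u) (blk D (ordS u))) => c' /=; rewrite ?allin0.
- by case: (x u); case: (x (ord_pred u)); case: (x (ordS u)).
- rewrite IH; last by apply: leq_trans c' _.
  rewrite allinU (CL (ordS u)) !allin1 ordSK.
  rewrite ltnNge (ltnW c') /= allin0.
  by case: (x u); case: (x (ord_pred u)); case: (x (ordS u)); case: (allin _ _).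
- rewrite IH; last by apply: leq_trans c _.
  rewrite allinU (CR (ord_pred u)) !allin1 ord_predK.
  rewrite ltnNge (ltnW c) /= allin0.
  by case: (x u); case: (x (ord_pred u)); case: (x (ordS u)); case: (allin _ _).
rewrite IH; last by apply: leq_trans c _.
rewrite allinU (CR (ord_pred u)) !allin1 ord_predK.
rewrite ltnNge (ltnW c) /= allin0.
rewrite IH; last by apply: leq_trans c' _.
rewrite allinU (CL (ordS u)) !allin1 ordSK.
rewrite ltnNge (ltnW c') /= allin0.
by case: (x u); case: (x (ord_pred u)); case: (x (ordS u));
   case: (allin _ _); case: (allin _ _).
Qed.

Lemma fsched_spec n (D : seq {set 'I_n}) x u :
  ordered_partition D -> fsched D x u = allin (dset D u) x.
Proof.
move=> HD; rewrite fsched_V // V_spec //.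
by rewrite /dset /dleft /dright -(dsetE D (@ord_pred n) (@ordS n))
     -(dsetE D (@ordS n) (@ord_pred n)).
Qed.

Theorem mainTheorem17 (n : nat) (D D' : seq {set 'I_n}) :
  0 < n -> ordered_partition D -> ordered_partition D' ->
  ~ sched_equiv D D' ->
  ((forall i : 'I_n, dset D i = dset D' i) <->
   (forall x : config n, fsched D x = fsched D' x)).
Proof.
move=> _ HD HD' _; split => H.
  by move=> x; apply/ffunP => u; rewrite !fsched_spec // H.
move=> i; apply/setP => j.
have := congr1 (fun y : config n => y i) (H [ffun k => k != j]).
by rewrite /= !fsched_spec // !allin_notin => /negb_inj.
Qed.
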